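(* Let $q\ge 2$ and let $R\subseteq\mathbb{Z}[\tfrac1q]\rtimes\mathbb{Z}$ be a rational subset. If $R\subseteq\mathbb{Z}[\tfrac1q]\times\{0\}$, then there is $k\in\mathbb{N}$ with $R\subseteq\tfrac{1}{q^k}\mathbb{Z}\times\{0\}$.
   Context: $\mathbb{Z}[\tfrac1q]\rtimes\mathbb{Z}$ is the group of pairs $(r,m)$, $r\in\mathbb{Z}[\tfrac1q]=\{nq^i:n,i\in\mathbb{Z}\}$, $m\in\mathbb{Z}$, with $(r,m)(r',m')=(r+q^m r',m+m')$, generated by $(\pm1,0),(0,\pm1)$. A subset is rational if it is accepted by a finite automaton whose edges are labelled by these generators, i.e. it is the set of products of edge labels along runs from an initial to a final state. *)

(* Defs.v *)
From mathcomp Require Import all_boot all_order all_algebra.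
Set Implicit Arguments. Unset Strict Implicit. Unset Printing Implicit Defensive.
Import Order.TTheory GRing.Theory Num.Theory.
Local Open Scope ring_scope.

(* Elements of Z[1/q] ⋊ Z are pairs (r, m) with r : rat (in Z[1/q]) and m : int.
   The subgroup of rat * int generated by the generators below is exactly
   Z[1/q] ⋊ Z. *)

Definition in_Zq (q : nat) (r : rat) : Prop :=
  exists (n i : int), r = n%:~R * (q%:~R : rat) ^ i.

Definition bs_mul (q : nat) (x y : rat * int) : rat * int :=
  (x.1 + (q%:~R : rat) ^ x.2 * y.1, x.2 + y.2).
Definition bs_one : rat * int := (0, 0).

Inductive gen := GaP | GaN | GtP | GtN.

Definition gen_val (g : gen) : rat * int :=
  match g with
  | GaP => (1, 0) | GaN => (-1, 0) | GtP => (0, 1) | GtN => (0, -1)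
  end.

Fixpoint word_val (q : nat) (w : seq gen) : rat * int :=
  match w with
  | [::] => bs_one
  | g :: w' => bs_mul q (gen_val g) (word_val q w')
  end.

Record automaton := Automaton {
  state : finType;
  delta : state -> gen -> state -> bool;
  initial : pred state;
  final : pred state }.

Inductive run (A : automaton) : state A -> seq gen -> state A -> Prop :=
  | run_nil s : @run A s [::] s
  | run_cons s g s1 w s' :
      @delta A s g s1 -> @run A s1 w s' -> @run A s (g :: w) s'.

Definition accepted (q : nat) (A : automaton) (x : rat * int) : Prop :=
  exists s s' w, @initial A s /\ @final A s' /\ @run A s w s' /\ word_val q w = x.

(* Main.v *)
Require Import Defs.
From mathcomp Require Import all_boot all_order all_algebra.
From Stdlib Require Import Classical.
From mathcomp Require Import ring.
Import Order.TTheory GRing.Theory Num.Theory.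
Local Open Scope ring_scope.

Lemma ht_cat q (u v : seq gen) :
  (word_val q (u ++ v)).2 = (word_val q u).2 + (word_val q v).2.
Proof.
elim: u => [|g u IH] /=; first by rewrite add0r.
by rewrite IH addrA.
Qed.

Lemma ht_indep q q' (u : seq gen) : (word_val q u).2 = (word_val q' u).2.
Proof. by elim: u => [|g u IH] //=; rewrite IH. Qed.

Lemma run_cat (A : automaton) s u p z s' :
  @run A s u p -> @run A p z s' -> @run A s (u ++ z) s'.
Proof.
elim=> [//|s0 g s1 w s2 Hd _ IH] Hz /=.
by apply: run_cons Hd (IH Hz).
Qed.

Lemma fin_bound (T : finType) (P : T -> nat -> Prop) :
  (forall p k k', P p k -> (k <= k')%N -> P p k') ->
  (forall p, exists k, P p k) -> exists k, forall p, P p k.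
Proof.
move=> Hm Hex.
have: forall l : seq T, exists k, forall p, p \in l -> P p k.
  elim=> [|a l [k Hk]]; first by exists 0%N.
  have [ka Ha] := Hex a.
  exists (maxn k ka) => p; rewrite inE => /orP [/eqP ->|Hp].
    by apply: Hm Ha _; rewrite leq_maxr.
  by apply: Hm (Hk p Hp) _; rewrite leq_maxl.
move/(_ (enum T)) => [k Hk]; exists k => p; apply: Hk; by rewrite mem_enum.
Qed.

Section Main.
Variables (q : nat) (hq : (2 <= q)%N) (A : automaton).
Hypothesis H : forall x, accepted q A x -> in_Zq q x.1 /\ x.2 = 0.

Let ht (u : seq gen) := (word_val q u).2.

Lemma ht_zero {s u p z s'} : @initial A s -> @run A s u p -> @run A p z s' ->
  @final A s' -> ht u + ht z = 0.
Proof.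
move=> Hs Hu Hz Hs'; rewrite /ht -ht_cat.
have Hacc : accepted q A (word_val q (u ++ z)).
  by exists s, s', (u ++ z); do !split => //; apply: run_cat Hu Hz.
by have [_ ->] := H _ Hacc.
Qed.

Lemma bound : exists k : nat, forall p s u z s', @initial A s -> @run A s u p ->
  @run A p z s' -> @final A s' -> - (k%:Z) <= ht u.
Proof.
apply: (@fin_bound _ (fun p k => forall s u z s', @initial A s -> @run A s u p ->
  @run A p z s' -> @final A s' -> - (k%:Z) <= ht u)).
  move=> p k k' Hk Hkk' s u z s' Hs Hu Hz Hs'.
  apply: le_trans (Hk _ _ _ _ Hs Hu Hz Hs'); by rewrite lerN2 lez_nat.
move=> p.
case: (classic (exists s0 u0 z0 s0', @initial A s0 /\ @run A s0 u0 p /\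
   @run A p z0 s0' /\ @final A s0')).
  move=> [s0 [u0 [z0 [s0' [Hs0 [Hu0 [Hz0 Hs0']]]]]]].
  exists `|ht u0|%N => s u z s' Hs Hu Hz Hs'.
  have E1 := ht_zero Hs Hu Hz0 Hs0'.
  have E2 := ht_zero Hs0 Hu0 Hz0 Hs0'.
  have -> : ht u = ht u0 by apply: (@addIr _ (ht z0)); rewrite E1 E2.
  apply: lerNnormlW; by rewrite abszE.
move=> Hn; exists 0%N => s u z s' Hs Hu Hz Hs'; exfalso; apply: Hn.
by exists s, u, z, s'.
Qed.

Let Q := (q%:~R : rat).

Lemma Q_neq0 : Q != 0.
Proof. by rewrite /Q intr_eq0 eqz_nat -lt0n; apply: leq_trans hq. Qed.

Lemma Qpow_int {z : int} : 0 <= z -> exists n : int, Q ^ z = n%:~R.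
Proof.
case: z => // m _; exists (q%:Z ^+ m); by rewrite /Q rmorphXn.
Qed.

Lemma intval k s s' (Hs : @initial A s) (Hs' : @final A s')
  (Hk : forall p u z, @run A s u p -> @run A p z s' -> - (k%:Z) <= ht u) :
  forall w u0 p, @run A s u0 p -> @run A p w s' ->
  exists n : int, (word_val q w).1 * Q ^ (ht u0 + k%:Z) = n%:~R.
Proof.
elim=> [|g w IH] u0 p Hu0 Hw; first by exists 0; rewrite /= mul0r.
have Hge : 0 <= ht u0 + k%:Z by rewrite -lerBlDr sub0r; apply: Hk Hu0 Hw.
inversion Hw; subst.
have Hu1 : @run A s (u0 ++ [:: g]) s1 by apply: run_cat Hu0 (run_cons H3 (run_nil _)).
have [n1 Hn1] := IH _ _ Hu1 H5.
have [n0 Hn0] := Qpow_int Hge.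
move: Hn1; rewrite /ht ht_cat /= => Hn1.
clear Hw Hu1; case: g H3 Hn1 => _ /= Hn1.
- exists (n0 + n1); rewrite addr0 in Hn1.
  by rewrite expr0z mul1r mulrDl mul1r Hn1 Hn0 intrD.
- exists (- n0 + n1); rewrite addr0 in Hn1.
  by rewrite expr0z mul1r mulrDl mulN1r Hn1 Hn0 intrD mulrNz.
- exists n1; rewrite add0r mulrAC -expfzDr; last exact: Q_neq0.
  rewrite mulrC -Hn1.
  by congr (_ * _ ^ _); ring.
- exists n1; rewrite add0r mulrAC -expfzDr; last exact: Q_neq0.
  rewrite mulrC -Hn1.
  by congr (_ * _ ^ _); ring.
Qed.

End Main.

Theorem mainTheorem7 (q : nat) (hq : (2 <= q)%N) (A : automaton) :
  (forall x, accepted q A x -> in_Zq q x.1 /\ x.2 = 0) ->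
  exists k : nat, forall x, accepted q A x ->
    (exists n : int, x.1 = n%:~R / (q%:~R : rat) ^+ k) /\ x.2 = 0.
Proof.
move=> H.
have [k Hk] := @bound _ _ H.
exists k => x Hx; split; last by case: (H x Hx).
move: Hx => [s [s' [w [Hs [Hs' [Hw <-]]]]]].
have [n Hn] := @intval q hq A k s s' Hs Hs' (fun p u z Hu Hz => Hk p s u z s' Hs Hu Hz Hs')
  w [::] s (run_nil s) Hw.
exists n; rewrite -Hn /= add0r.
have -> : (q%:~R : rat) ^ (k%:Z) = (q%:~R : rat) ^+ k by [].
rewrite mulfK // expf_neq0 //.
by rewrite intr_eq0 eqz_nat -lt0n; apply: leq_trans hq.
Qed.
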